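(* For each arrival $t\ge 1$ and each level $0\le i\le L^{(t)}+1$, we have $\mathscr{C}^{(t-1)}_{i}\preceq\mathscr{C}^{(t)}_{i}$.
   Context: An offline instance $(\mathcal{M},D)$ consists of demand pairs $D=\{(u_j,v_j)\}$ over a terminal set $V=\{u_j,v_j\}$, each terminal in exactly one pair (the other element of its pair is its mate), and a metric $\mathcal{M}$ on $V$ with all distances at least $1$, viewed as the complete graph on $V$ with edge costs equal to distances. A clustering of $V$ is a partition of $V$; for a clustering $\mathscr{C}$, $\mathcal{M}/\mathscr{C}$ denotes the shortest-path metric on $\mathscr{C}$ of the graph obtained from the complete weighted graph on $V$ by contracting each cluster into a single vertex. For clusterings $\mathscr{C}_1$ of $V_1$ and $\mathscr{C}_2$ of $V_2$, write $\mathscr{C}_1\preceq\mathscr{C}_2$ if every cluster of $\mathscr{C}_1$ is contained in some cluster of $\mathscr{C}_2$. Clustering procedure: ${\sf level}(v)=\lceil\log_2{\sf dist}_{\mathcal{M}}(v,\text{mate of }v)\rceil$, ${\sf level}(C)=\max_{v\in C}{\sf level}(v)$, $L=\max_{v\in V}{\sf level}(v)$. $\mathscr{C}_0$ is the clustering into singletons. For $i=0,\dots,L$: a cluster $C\in\mathscr{C}_i$ is $i$-active if ${\sf level}(C)\ge i$; $H_i$ is the graph whose vertices are the $i$-active clusters of $\mathscr{C}_i$, with an edge between distinct $C_1,C_2$ iff ${\sf dist}_{\mathcal{M}/\mathscr{C}_i}(C_1,C_2)<2^{i+1}$; $\mathscr{C}_{i+1}$ consists of all non-$i$-active clusters of $\mathscr{C}_i$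 together with, for each connected component $Q$ of $H_i$, the union of the clusters in $Q$. Online setting: pairs $(u^{(1)},v^{(1)}),\dots,(u^{(n)},v^{(n)})$ arrive in order; for $1\le t\le n$ the instance $(\mathcal{M}^{(t)},D^{(t)})$ consists of the first $t$ pairs and the restriction of the metric to their terminals $V^{(t)}$. Running the procedure on it yields $L^{(t)}$, $\mathscr{C}^{(t)}_i$, $H^{(t)}_i$; for $i\ge L^{(t)}+1$ set $\mathscr{C}^{(t)}_i:=\mathscr{C}^{(t)}_{L^{(t)}+1}$ and $H^{(t)}_i$ empty. For $t=0$, $L^{(0)}=0$ and every $\mathscr{C}^{(0)}_i$ and $H^{(0)}_i$ is empty. *)

(* Defs.v *)
From HB Require Import structures.
From mathcomp Require Import all_boot all_order all_algebra.
From mathcomp Require Import boolp reals exp.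
Set Implicit Arguments. Unset Strict Implicit. Unset Printing Implicit Defensive.
Import Order.TTheory GRing.Theory Num.Theory.
Local Open Scope ring_scope.

Section Clustering.
Variables (R : realType) (n : nat) (d : 'I_(2 * n) -> 'I_(2 * n) -> R).
Local Notation T := ('I_(2 * n)).

(* Terminals are encoded as 0,...,2n-1; the j-th arriving pair (j = 0..n-1)
   is (u^(j+1), v^(j+1)) = (2j, 2j+1).  The mate of 2j is 2j+1 and vice versa. *)
Definition mate_nat (k : nat) : nat := if odd k then k.-1 else k.+1.
Definition mate (x : T) : T := insubd x (mate_nat x).

Definition Vt (t : nat) : {set T} := [set x : T | (x < 2 * t)%N].

(* level(v) = ceil(log_2 dist(v, mate v)) (a nonnegative integer since dist >= 1) *)
Definition level (v : T) : nat :=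
  `| Num.ceil (ln (d v (mate v)) / ln 2) |%N.
Definition clevel (C : {set T}) : nat := (\max_(v in C) level v)%N.
Definition Ltop (t : nat) : nat := (\max_(v in Vt t) level v)%N.

(* Contracted metric M/C: shortest-path distance between clusters in the graph
   obtained from the complete weighted graph on cover C by contracting each
   cluster.  A walk in the contracted graph is a sequence of original edges
   (x_1,y_1),...,(x_k,y_k) with x_1 in A, y_k in B, and y_j, x_(j+1) in a
   common cluster; its length is the sum of d x_j y_j. *)
Definition same_cluster (C : {set {set T}}) (x y : T) : Prop :=
  exists2 X, X \in C & (x \in X) && (y \in X).

Definition cwalk (C : {set {set T}}) (A B : {set T}) (s : seq (T * T)) : Prop :=
  match s with
  | [::] => A = B
  | e :: _ =>
      [/\ e.1 \in A, (last e s).2 \in B,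
          (forall j, (j.+1 < size s)%N ->
                     same_cluster C (nth e s j).2 (nth e s j.+1).1) &
          (forall x, x \in s -> (x.1 \in cover C) && (x.2 \in cover C))]
  end.

Definition cdist_lt (C : {set {set T}}) (A B : {set T}) (r : R) : Prop :=
  exists2 s, cwalk C A B s & \sum_(e <- s) d e.1 e.2 < r.

Definition active (i : nat) (C : {set {set T}}) : {set {set T}} :=
  [set X in C | (i <= clevel X)%N].

Definition Hedge (i : nat) (C : {set {set T}}) : rel {set T} :=
  fun X Y => [&& X \in active i C, Y \in active i C, X != Y &
                 `[< cdist_lt C X Y (2 ^+ i.+1) >] ].

Definition step (i : nat) (C : {set {set T}}) : {set {set T}} :=
  [set X in C | ~~ (i <= clevel X)%N] :|:
  [set (\bigcup_(Y | connect (Hedge i C) X Y) Y) | X in active i C].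

(* C^(t)_i, with C^(t)_i := C^(t)_(L^(t)+1) for i >= L^(t)+1. *)
Fixpoint clust (t i : nat) : {set {set T}} :=
  match i with
  | 0 => [set [set x] | x in Vt t]
  | i'.+1 => if (i' <= Ltop t)%N then step i' (clust t i') else clust t i'
  end.

End Clustering.

Definition refines (T : finType) (C1 C2 : {set {set T}}) : Prop :=
  forall X, X \in C1 -> exists2 Y, Y \in C2 & X \subset Y.

(* Main.v *)
Require Import Defs.
From HB Require Import structures.
From mathcomp Require Import all_boot all_order all_algebra.
From mathcomp Require Import boolp reals exp.
Import Order.TTheory GRing.Theory Num.Theory.
Local Open Scope ring_scope.

Lemma refines_trans (T0 : finType) (A B C : {set {set T0}}) :
  refines A B -> refines B C -> refines A C.
Proof.
move=> hab hbc X /hab [Y /hbc [Z zC sYZ] sXY]; exists Z => //.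
exact: subset_trans sXY sYZ.
Qed.

Lemma refines_cover (T0 : finType) (A B : {set {set T0}}) :
  refines A B -> cover A \subset cover B.
Proof.
move=> hab; apply/subsetP => x /bigcupP [X XA xX].
case: (hab X XA) => Y YB sXY; apply/bigcupP; exists Y => //.
exact: (subsetP sXY).
Qed.

Section S.
Variables (R : realType) (n : nat) (d : 'I_(2 * n) -> 'I_(2 * n) -> R).
Local Notation T := ('I_(2 * n)).

Lemma clevel_sub (X Y : {set T}) : X \subset Y -> (clevel d X <= clevel d Y)%N.
Proof.
move=> sXY; apply/bigmax_leqP => v vX; apply: leq_bigmax_cond.
exact: (subsetP sXY).
Qed.

Lemma coarsen i (C : {set {set T}}) : refines C (step d i C).
Proof.
move=> X XC; case: (boolP (i <= clevel d X)%N) => hl.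
- exists (\bigcup_(Y | connect (Hedge d i C) X Y) Y).
    rewrite /step; apply/setUP; right; apply/imsetP; exists X => //.
    by rewrite /active inE XC hl.
  by apply: (bigcup_max X) => //; exact: connect0.
- exists X => //; rewrite /step; apply/setUP; left; by rewrite inE XC hl.
Qed.

Lemma step_mono i (P Q : {set {set T}}) :
  refines P Q -> refines (step d i P) (step d i Q).
Proof.
move=> hPQ.
pose f (Y : {set T}) : {set T} := odflt Y [pick Z in Q | Y \subset Z].
have hf : forall Y, Y \in P -> (f Y \in Q) && (Y \subset f Y).
  move=> Y YP; rewrite /f; case: pickP => [Z /andP[] -> -> //|none].
  case: (hPQ Y YP) => Z ZQ sYZ; by move: (none Z); rewrite ZQ sYZ.
have hact : forall Y, Y \in active d i P -> f Y \in active d i Q.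
  move=> Y; rewrite !inE => /andP[YP hl]; case/andP: (hf Y YP) => fQ sY.
  rewrite fQ /=; apply: leq_trans hl _; exact: clevel_sub.
have hedge : forall Y Z, Hedge d i P Y Z -> connect (Hedge d i Q) (f Y) (f Z).
  move=> Y Z /and4P[YA ZA _ /asboolP hd].
  case: (eqVneq (f Y) (f Z)) => [-> //| ne]; apply: connect1.
  apply/and4P; split; [exact: hact|exact: hact|exact: ne|]; apply/asboolP.
  have YP : Y \in P by move: YA; rewrite inE => /andP[].
  have ZP : Z \in P by move: ZA; rewrite inE => /andP[].
  case/andP: (hf Y YP) => _ sY; case/andP: (hf Z ZP) => _ sZ.
  case: hd => s hw hs; exists s => //.
  move: hw; case: s hs => [|e s] hs /=.
    by move=> eYZ; rewrite eYZ eqxx in ne.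
  case=> h1 h2 h3 h4; split.
  - exact: (subsetP sY).
  - exact: (subsetP sZ).
  - move=> j hj; case: (h3 j hj) => X XP /andP[a b].
    case: (hPQ X XP) => W WQ sXW; exists W => //; by rewrite !(subsetP sXW).
  - move=> x xs; case/andP: (h4 x xs) => a b.
    by rewrite !(subsetP (refines_cover _ _ _ hPQ)).
have hconn : forall X Y, X \in active d i P -> connect (Hedge d i P) X Y ->
    (Y \in P) && connect (Hedge d i Q) (f X) (f Y).
  move=> X Y XA /connectP [p hp ->] {Y}.
  elim: p X XA hp => [|Z p IH] X XA /=.
    by rewrite connect0 andbT; move: XA; rewrite inE => /andP[].
  case/andP => hXZ hp.
  have ZA : Z \in active d i P by case/and4P: hXZ.
  case/andP: (IH Z ZA hp) => -> hc /=; exact: connect_trans (hedge _ _ hXZ) hc.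
move=> X; rewrite {1}/step => /setUP [].
- rewrite inE => /andP[XP hl]; case: (hPQ X XP) => Y YQ sXY.
  case: (coarsen i Q Y YQ) => Z ZS sYZ; exists Z => //; exact: subset_trans sXY sYZ.
- case/imsetP => X0 X0A ->.
  exists (\bigcup_(Y | connect (Hedge d i Q) (f X0) Y) Y).
    rewrite /step; apply/setUP; right; apply/imsetP; exists (f X0) => //.
    exact: hact.
  apply/bigcupsP => Y hY; case/andP: (hconn X0 Y X0A hY) => YP hc.
  apply: (bigcup_max (f Y)) => //; by case/andP: (hf Y YP).
Qed.

Lemma Vt_mono s t : (s <= t)%N -> Vt n s \subset Vt n t.
Proof.
move=> hst; apply/subsetP => x; rewrite !inE => h; apply: leq_trans h _.
by rewrite leq_mul2l hst orbT.
Qed.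

Lemma Ltop_mono s t : (s <= t)%N -> (Ltop d s <= Ltop d t)%N.
Proof.
move=> hst; apply/bigmax_leqP => v vs; apply: leq_bigmax_cond.
exact: (subsetP (Vt_mono _ _ hst)).
Qed.

Lemma clust_mono s t i : (s <= t)%N -> refines (clust d s i) (clust d t i).
Proof.
move=> hst; elim: i => [|i IH] /=.
  move=> X /imsetP [x xV ->]; exists [set x] => //; apply/imsetP; exists x => //.
  exact: (subsetP (Vt_mono _ _ hst)).
case: ifP => hs; case: ifP => ht.
- exact: step_mono.
- by rewrite (leq_trans hs (Ltop_mono _ _ hst)) in ht.
- exact: (refines_trans _ _ _ _ IH (coarsen i (clust d t i))).
- exact: IH.
Qed.

End S.

Theorem lemma4p2 (R : realType) (n : nat) (d : 'I_(2 * n) -> 'I_(2 * n) -> R)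
  (d_refl : forall x, d x x = 0)
  (d_sym : forall x y, d x y = d y x)
  (d_tri : forall x y z, d x z <= d x y + d y z)
  (d_ge1 : forall x y, x != y -> 1 <= d x y)
  (t i : nat) (ht1 : (1 <= t)%N) (htn : (t <= n)%N)
  (hi : (i <= Ltop d t + 1)%N) :
  refines (clust d (t - 1) i) (clust d t i).
Proof.
apply: clust_mono; exact: leq_subr.
Qed.
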